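(* Let $m\ge 1$ and let $X\subset\mathbb{N}_0^m$ be a finite lower set of $(\mathbb{N}_0^m,\preceq)$ with $|X|=p$. Then the $p\times p$ generalized Vandermonde matrix $V(X,X)$, whose rows are indexed by the points $\boldsymbol{x}\in X$ (viewed as points of $\mathbb{R}^m$) and whose columns are indexed by the exponents $\boldsymbol{\alpha}\in X$, with entries $\boldsymbol{x}^{\boldsymbol{\alpha}}$, is invertible.
   Context: $\preceq$ is the componentwise (product) order on $\mathbb{N}_0^m$: $\boldsymbol{y}\preceq\boldsymbol{x}$ iff $y_j\le x_j$ for all $j$. A lower set is a nonempty subset $I\subseteq\mathbb{N}_0^m$ such that $\boldsymbol{x}\in I$ and $\boldsymbol{y}\preceq\boldsymbol{x}$ imply $\boldsymbol{y}\in I$. For $\boldsymbol{x}\in\mathbb{R}^m$ and $\boldsymbol{\alpha}\in\mathbb{N}_0^m$, $\boldsymbol{x}^{\boldsymbol{\alpha}}=x_1^{\alpha_1}\cdots x_m^{\alpha_m}$ with the convention $0^0=1$. *)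

(* Defs.v *)
From HB Require Import structures.
From mathcomp Require Import all_boot all_order all_algebra.
From mathcomp Require Import reals.
Set Implicit Arguments. Unset Strict Implicit. Unset Printing Implicit Defensive.
Import Order.TTheory GRing.Theory Num.Theory.
Local Open Scope ring_scope.

Notation multi m := {ffun 'I_m -> nat}.

Definition mle (m : nat) (y x : multi m) : Prop := forall k : 'I_m, (y k <= x k)%N.

(* A lower set (nonempty, downward closed), given as a duplicate-free list. *)
Definition lower_set (m : nat) (X : seq (multi m)) : Prop :=
  X != [::] /\ forall x y : multi m, x \in X -> mle y x -> y \in X.

(* x^alpha for x in N_0^m viewed in R^m; x ^+ 0 = 1 gives 0^0 = 1. *)
Definition mpow (R : realType) (m : nat) (x alpha : multi m) : R :=
  \prod_(k < m) ((x k)%:R ^+ alpha k).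

(* Generalized Vandermonde V(X,X): rows indexed by points, columns by exponents,
   both enumerated in the order of the list X. *)
Definition gvander (R : realType) (m : nat) (X : seq (multi m)) : 'M[R]_(size X) :=
  \matrix_(i < size X, j < size X)
     mpow R (nth [ffun=> 0%N] X i) (nth [ffun=> 0%N] X j).

(* Main.v *)
Require Import Defs.
From HB Require Import structures.
From mathcomp Require Import all_boot all_order all_algebra.
From mathcomp Require Import reals.
Set Implicit Arguments. Unset Strict Implicit. Unset Printing Implicit Defensive.
Import Order.TTheory GRing.Theory Num.Theory.
Local Open Scope ring_scope.

Definition sdeg (m : nat) (x : {ffun 'I_m -> nat}) : nat := (\sum_(k < m) x k)%N.

Definition qp (R : realType) (n : nat) : {poly R} := \prod_(i < n) ('X - (i%:R)%:P).

Lemma size_qp (R : realType) n : size (qp R n) = n.+1.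
Proof. by rewrite /qp size_prod_XsubC [index_enum _]unlock -enumT -cardT card_ord. Qed.

Lemma qp_root (R : realType) n t : (t < n)%N -> (qp R n).[t%:R] = 0.
Proof.
move=> Ht; rewrite /qp horner_prod; apply/eqP; rewrite prodf_seq_eq0.
by apply/hasP; exists (Ordinal Ht); rewrite ?mem_index_enum //= hornerXsubC subrr.
Qed.

Lemma qp_nz (R : realType) n : (qp R n).[n%:R] != 0.
Proof.
rewrite /qp horner_prod; apply/prodf_neq0 => i _.
rewrite hornerXsubC subr_eq0 eqr_nat; apply/eqP => H.
by move: (ltn_ord i); rewrite -H ltnn.
Qed.

Definition Lb (R : realType) m (b x : {ffun 'I_m -> nat}) : R :=
  \prod_(k < m) (qp R (b k)).[(x k)%:R].

Lemma Lb_expand (R : realType) m (b x : {ffun 'I_m -> nat}) N :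
  (forall k, b k < N)%N ->
  Lb R b x = \sum_(f : {ffun 'I_m -> 'I_N})
     (\prod_(k < m) (qp R (b k))`_(f k)) * mpow R x [ffun k => (f k : nat)].
Proof.
move=> HN; rewrite /Lb.
under eq_bigr => k _ do rewrite (@horner_coef_wide _ N) ?size_qp ?HN //.
rewrite bigA_distr_bigA; apply: eq_bigr => f _.
rewrite /mpow -big_split /=; apply: eq_bigr => k _; by rewrite ffunE.
Qed.

Lemma sdeg_lt m (b x : {ffun 'I_m -> nat}) : mle b x -> b != x -> (sdeg b < sdeg x)%N.
Proof.
move=> Hle Hne.
have [k Hk] : exists k, (b k < x k)%N.
  apply/existsP; apply: contraNT Hne => /existsPn H; apply/eqP/ffunP => k.
  by apply/eqP; rewrite eqn_leq Hle leqNgt H.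
rewrite /sdeg.
have -> : (\sum_(k < m) x k = \sum_(k < m) b k + \sum_(k < m) (x k - b k))%N.
  by rewrite -big_split /=; apply: eq_bigr => j _; rewrite subnKC.
rewrite -[X in (X < _)%N]addn0 ltn_add2l (bigD1 k) //=; apply: leq_trans (leq_addr _ _); rewrite subn_gt0 Hk.
by [].
Qed.

Lemma kernel0 (R : realType) m (X : seq {ffun 'I_m -> nat}) :
  uniq X -> lower_set X ->
  forall u : 'rV[R]_(size X), u *m gvander R X = 0 -> u = 0.
Proof.
move=> uX [_ low] u Hu.
set x0 := [ffun=> 0%N] : {ffun 'I_m -> nat}.
have Hcol : forall j : 'I_(size X),
    \sum_i u 0 i * mpow R (nth x0 X i) (nth x0 X j) = 0.
  move=> j; transitivity ((u *m gvander R X) 0 j); last by rewrite Hu mxE.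
  by rewrite mxE; apply: eq_bigr => i _; rewrite mxE.
case: (pickP (fun i => u 0 i != 0)) => [i1 Hi1 | H0]; last first.
  apply/rowP => i; rewrite mxE; have := H0 i; rewrite /= => /negbFE/eqP; exact.
case: (@arg_maxnP _ i1 (fun i => u 0 i != 0) (fun i : 'I_(size X) => sdeg (nth x0 X i)) Hi1) => i0 Hi0 Hmax.
set b := nth x0 X i0.
have bX : b \in X by exact: mem_nth.
have HN : forall k, (b k < (sdeg b).+1)%N.
  by move=> k; rewrite ltnS /sdeg (bigD1 k) //= leq_addr.
have Hsum : \sum_i u 0 i * Lb R b (nth x0 X i) = 0.
  under eq_bigr => i _ do rewrite (Lb_expand _ _ HN) mulr_sumr.
  rewrite exchange_big /=; apply: big1 => f _.
  under eq_bigr => i _ do rewrite mulrCA.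
  rewrite -mulr_sumr.
  case: (boolP [forall k, (f k <= b k)%N]) => [/forallP Hf | /forallPn [k Hk]].
  - set g := [ffun k => (f k : nat)].
    have gX : g \in X by apply: (low b) => // k; rewrite ffunE.
    have gi : (index g X < size X)%N by rewrite index_mem.
    have := Hcol (Ordinal gi).
    by rewrite /= nth_index // => ->; rewrite mulr0.
  - rewrite (bigD1 k) //= nth_default ?mul0r // size_qp ltnNge //.
rewrite (bigD1 i0) //= big1 ?addr0 in Hsum; last first.
  move=> i Hi; case: (eqVneq (u 0 i) 0) => [->|Hui]; first by rewrite mul0r.
  case: (boolP [forall k, (b k <= nth x0 X i k)%N]) => [/forallP Hle|/forallPn [k Hk]].
  - have := Hmax i Hui => /=; rewrite leqNgt => /negP; case.
    apply: sdeg_lt => //; rewrite /b nth_uniq // eq_sym //.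
  - by rewrite /Lb (bigD1 k) //= qp_root ?mul0r ?mulr0 // ltnNge.
exfalso; move/eqP: Hsum; rewrite mulf_eq0 (negbTE Hi0) /=; apply/negP.
rewrite /Lb prodf_seq_neq0; apply/allP => k _ /=; exact: qp_nz.
Qed.

Theorem proposition1 (R : realType) (m : nat) (X : seq {ffun 'I_m -> nat}) :
  (0 < m)%N -> uniq X -> lower_set X -> gvander R X \in unitmx.
Proof.
move=> _ uX lX; rewrite -row_free_unit -kermx_eq0; apply/eqP/row_matrixP => i.
rewrite row0; apply: kernel0 => //.
by rewrite -row_mul; have /sub_kermxP -> := submx_refl (kermx (gvander R X)); rewrite row0.
Qed.
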